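(* Let $a>0$, let $q$ be a continuous complex-valued function on $[-a,a]$, and let $f,g\in C^{2}(-a,a)\cap C^{1}[-a,a]$ be two solutions of $y''-qy=0$ on $(-a,a)$ which do not vanish anywhere on $[-a,a]$ and are normalized by $f(0)=g(0)=1$. Put $h_f=f'(0)$ and $h_g=g'(0)$, and let $\{\varphi_k^f\}_{k\ge0}$ and $\{\varphi_k^g\}_{k\ge0}$ be the systems of recursive integrals built from $f$ and $g$ respectively (as described in the context, with initial point $x_0=0$). Then \[ \varphi_k^f=\varphi_k^g \quad\text{for every odd } k\in\mathbb{N}, \] and \[ \varphi_k^f=\varphi_k^g+\frac{h_f-h_g}{k+1}\,\varphi_{k+1}^g\quad\text{for every even } k\in\mathbb{N}_0=\{0,1,2,\dots\}. \]
   Context: For a function $F\in C^{2}(-a,a)\cap C^{1}[-a,a]$ not vanishing on $[-a,a]$, define recursively on $[-a,a]$ (with initial point $x_0=0$) \[ X^{(0)}\equiv1,\quad X^{(n)}(x)=n\int_{0}^{x}X^{(n-1)}(s)\,\big(F^{2}(s)\big)^{(-1)^{n}}\,ds,\qquad \widetilde X^{(0)}\equiv1,\quad \widetilde X^{(n)}(x)=n\int_{0}^{x}\widetilde X^{(n-1)}(s)\,\big(F^{2}(s)\big)^{(-1)^{n-1}}\,ds, \] for $n=1,2,\dots$, and set $\varphi_k^F=F\,X^{(k)}$ for $k$ odd and $\varphi_k^F=F\,\widetilde X^{(k)}$ for $k$ even (including $k=0$). *)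

(* Defs.v *)
From Stdlib Require Import Reals.
From Coquelicot Require Export Coquelicot.
Open Scope R_scope.

Definition Icc (a x : R) : Prop := - a <= x <= a.
Definition Ioo (a x : R) : Prop := - a < x < a.

Definition cont_on_Icc (a : R) (F : R -> C) : Prop :=
  forall x, Icc a x ->
    filterlim F (within (Icc a) (locally x)) (locally (F x)).

(* F in C^2(-a,a) ∩ C^1[-a,a], with F1 = F' and F2 = F'' :
   F and F' are continuous on the closed interval [-a,a] (F' being the
   continuous extension of the derivative), F' is the derivative of F
   on (-a,a), F'' is the derivative of F' on (-a,a) and F'' is continuous
   on (-a,a). *)
Definition C2_C1 (a : R) (F F1 F2 : R -> C) : Prop :=
  cont_on_Icc a F /\ cont_on_Icc a F1 /\
  (forall x, Ioo a x -> is_derive F x (F1 x)) /\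
  (forall x, Ioo a x -> is_derive F1 x (F2 x)) /\
  (forall x, Ioo a x -> continuous F2 x).

Definition wpow (F : R -> C) (n : nat) (s : R) : C :=
  if Nat.even n then Cmult (F s) (F s) else Cinv (Cmult (F s) (F s)).

(* X^{(n)} (tilde = false) and \tilde X^{(n)} (tilde = true), initial point 0:
   X^{(n)}(x) = n ∫_0^x X^{(n-1)}(s) (F^2(s))^{(-1)^n} ds,
   \tilde X^{(n)}(x) = n ∫_0^x \tilde X^{(n-1)}(s) (F^2(s))^{(-1)^{n-1}} ds. *)
Fixpoint Xrec (F : R -> C) (tilde : bool) (n : nat) : R -> C :=
  match n with
  | O => fun _ => RtoC 1
  | S m => fun x =>
      Cmult (RtoC (INR (S m)))
        (RInt (V := C_R_CompleteNormedModule)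
           (fun s => Cmult (Xrec F tilde m s)
                           (wpow F (if tilde then m else S m) s)) 0 x)
  end.

(* phi_k^F = F X^{(k)} for k odd, F \tilde X^{(k)} for k even *)
Definition phi (F : R -> C) (k : nat) (x : R) : C :=
  Cmult (F x) (Xrec F (Nat.even k) k x).

(* Main.v *)
Require Import Defs.
From Stdlib Require Import Reals Lra.
From Coquelicot Require Import Coquelicot.
Open Scope R_scope.

Lemma Cd_pair (fr fi : R -> R) x dr di :
  is_derive fr x dr -> is_derive fi x di ->
  is_derive (V := C_R_NormedModule) (fun t => ((fr t, fi t) : C)) x ((dr, di) : C).
Proof.
  intros Hr Hi. unfold is_derive in *.
  eapply filterdiff_ext_lin.
  - apply (filterdiff_comp'_2 (W := C_R_NormedModule) fr fi (fun a b => ((a, b) : C)) x _ _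
      (fun a b => ((a, b) : C)) Hr Hi).
    apply (filterdiff_linear (V := C_R_NormedModule)
              (fun t : prod_NormedModule R_AbsRing R_NormedModule R_NormedModule => ((fst t, snd t) : C))).
    apply (is_linear_ext (V := C_R_NormedModule) (fun t => t)).
    intros [a b]; reflexivity.
    exact (@is_linear_id R_AbsRing C_R_NormedModule).
  - intros y. reflexivity.
Qed.

Lemma Cd_fst (f : R -> C) x l :
  is_derive (V := C_R_NormedModule) f x l -> is_derive (fun t => fst (f t)) x (fst l).
Proof.
  intros H. unfold is_derive in *.
  eapply filterdiff_ext_lin.
  - eapply filterdiff_comp. apply H.
    apply (filterdiff_linear (U := C_R_NormedModule) (V := R_NormedModule) fst).
    exact (@is_linear_fst R_AbsRing R_NormedModule R_NormedModule).
  - intros y. reflexivity.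
Qed.

Lemma Cd_snd (f : R -> C) x l :
  is_derive (V := C_R_NormedModule) f x l -> is_derive (fun t => snd (f t)) x (snd l).
Proof.
  intros H. unfold is_derive in *.
  eapply filterdiff_ext_lin.
  - eapply filterdiff_comp. apply H.
    apply (filterdiff_linear (U := C_R_NormedModule) (V := R_NormedModule) snd).
    exact (@is_linear_snd R_AbsRing R_NormedModule R_NormedModule).
  - intros y. reflexivity.
Qed.

Lemma Cd_eq (f : R -> C) x l l' :
  is_derive (V := C_R_NormedModule) f x l -> l = l' -> is_derive (V := C_R_NormedModule) f x l'.
Proof. intros H ->; exact H. Qed.

Lemma Rd_mult (f g : R -> R) x df dg : is_derive f x df -> is_derive g x dg ->
  is_derive (fun t => f t * g t) x (df * g x + f x * dg).
Proof. intros; apply (is_derive_mult (K:=R_AbsRing) f g); auto. intros; apply Rmult_comm. Qed.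

Lemma Cd_mult (f g : R -> C) x df dg :
  is_derive (V := C_R_NormedModule) f x df -> is_derive (V := C_R_NormedModule) g x dg ->
  is_derive (V := C_R_NormedModule) (fun t => Cmult (f t) (g t)) x
    (Cplus (Cmult df (g x)) (Cmult (f x) dg)).
Proof.
  intros Hf Hg.
  pose proof (Cd_fst _ _ _ Hf) as Hf1. pose proof (Cd_snd _ _ _ Hf) as Hf2.
  pose proof (Cd_fst _ _ _ Hg) as Hg1. pose proof (Cd_snd _ _ _ Hg) as Hg2.
  eapply Cd_eq.
  apply (is_derive_ext (fun t => ((fst (f t) * fst (g t) - snd (f t) * snd (g t),
                                  fst (f t) * snd (g t) + snd (f t) * fst (g t)) : C))).
  { intros t. reflexivity. }
  apply Cd_pair.
  apply (is_derive_minus (fun t => fst (f t) * fst (g t)) (fun t => snd (f t) * snd (g t)));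
    apply Rd_mult; eauto.
  apply (is_derive_plus (fun t => fst (f t) * snd (g t)) (fun t => snd (f t) * fst (g t)));
    apply Rd_mult; eauto.
  destruct df as [a b], dg as [c d], (f x) as [p q], (g x) as [r s].
  unfold Cplus, Cmult, minus, plus, opp; simpl.
  f_equal; ring.
Qed.

Lemma C_nz_norm (z : C) : z <> RtoC 0 -> fst z ^ 2 + snd z ^ 2 <> 0.
Proof.
  destruct z as [p q]; simpl; intros H E. apply H.
  assert (p * p = 0) as E1 by (pose proof (Rle_0_sqr p); pose proof (Rle_0_sqr q); unfold Rsqr in *; lra).
  assert (q * q = 0) as E2 by (pose proof (Rle_0_sqr p); pose proof (Rle_0_sqr q); unfold Rsqr in *; lra).
  apply Rsqr_0_uniq in E1. apply Rsqr_0_uniq in E2. subst. reflexivity.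
Qed.
Lemma Cd_inv (g : R -> C) x dg :
  is_derive (V := C_R_NormedModule) g x dg -> g x <> RtoC 0 ->
  is_derive (V := C_R_NormedModule) (fun t => Cinv (g t)) x
    (Copp (Cmult dg (Cinv (Cmult (g x) (g x))))).
Proof.
  intros Hg Hnz.
  pose proof (Cd_fst _ _ _ Hg) as Hg1. pose proof (Cd_snd _ _ _ Hg) as Hg2.
  pose proof (C_nz_norm _ Hnz) as Hn.
  assert (Hd : is_derive (fun t => fst (g t) ^ 2 + snd (g t) ^ 2) x
     (INR 2 * fst dg * fst (g x) ^ 1 + INR 2 * snd dg * snd (g x) ^ 1)).
  { apply (is_derive_plus (fun t => fst (g t) ^ 2) (fun t => snd (g t) ^ 2));
      apply is_derive_pow; auto. }
  eapply Cd_eq.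
  apply (is_derive_ext (fun t => ((fst (g t) / (fst (g t) ^ 2 + snd (g t) ^ 2),
                                  - snd (g t) / (fst (g t) ^ 2 + snd (g t) ^ 2)) : C))).
  { intros t. reflexivity. }
  apply Cd_pair.
  apply (is_derive_div (fun t => fst (g t)) (fun t => fst (g t) ^ 2 + snd (g t) ^ 2)).
  exact Hg1. exact Hd. exact Hn.
  apply (is_derive_div (fun t => - snd (g t)) (fun t => fst (g t) ^ 2 + snd (g t) ^ 2)).
  exact (is_derive_opp (fun t => snd (g t)) x _ Hg2). exact Hd. exact Hn.
  revert Hn.
  destruct dg as [a b], (g x) as [p q]. simpl. intros Hn.
  unfold Copp, Cmult, Cinv, opp; simpl.
  assert (Hn' : p*p+q*q <> 0) by (intro E; apply Hn; rewrite <- E; ring).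
  f_equal; field; repeat split; try exact Hn';
  intro E; apply Hn'; apply Rsqr_0_uniq; unfold Rsqr; rewrite <- E; ring.
Qed.

Lemma Cc_pair (fr fi : R -> R) x :
  continuous fr x -> continuous fi x ->
  continuous (U := C_UniformSpace) (fun t => ((fr t, fi t) : C)) x.
Proof.
  intros Hr Hi.
  apply (continuous_comp_2 (X := C_UniformSpace) fr fi (fun a b => ((a, b) : C))); auto.
  apply (continuous_ext (U := C_UniformSpace) (fun y : R * R => y)).
  intros [a b]; reflexivity.
  apply continuous_id.
Qed.

Lemma Cc_fst (f : R -> C) x :
  continuous (U := C_UniformSpace) f x -> continuous (fun t => fst (f t)) x.
Proof.
  intros H. apply (continuous_comp f fst). exact H.
  destruct (f x) as [a b]. apply (continuous_fst (U:=R_UniformSpace) (V:=R_UniformSpace)).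
Qed.

Lemma Cc_snd (f : R -> C) x :
  continuous (U := C_UniformSpace) f x -> continuous (fun t => snd (f t)) x.
Proof.
  intros H. apply (continuous_comp f snd). exact H.
  destruct (f x) as [a b]. apply (continuous_snd (U:=R_UniformSpace) (V:=R_UniformSpace)).
Qed.

Lemma Rc_mult (f g : R -> R) x : continuous f x -> continuous g x ->
  continuous (fun t => f t * g t) x.
Proof. intros; apply (continuous_mult (K:=R_AbsRing) f g); auto. Qed.

Lemma Rc_inv (f : R -> R) x : continuous f x -> f x <> 0 ->
  continuous (fun t => / f t) x.
Proof.
  intros H Hn. apply continuity_pt_filterlim.
  apply (continuity_pt_inv f x); auto. apply continuity_pt_filterlim. exact H.
Qed.

Lemma Cc_mult (f g : R -> C) x :
  continuous (U := C_UniformSpace) f x -> continuous (U := C_UniformSpace) g x ->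
  continuous (U := C_UniformSpace) (fun t => Cmult (f t) (g t)) x.
Proof.
  intros Hf Hg.
  pose proof (Cc_fst _ _ Hf). pose proof (Cc_snd _ _ Hf).
  pose proof (Cc_fst _ _ Hg). pose proof (Cc_snd _ _ Hg).
  apply (continuous_ext (fun t => ((fst (f t) * fst (g t) - snd (f t) * snd (g t),
                                  fst (f t) * snd (g t) + snd (f t) * fst (g t)) : C))).
  { intros t. reflexivity. }
  apply Cc_pair.
  apply (continuous_minus (fun t => fst (f t) * fst (g t)) (fun t => snd (f t) * snd (g t)));
    apply Rc_mult; auto.
  apply (continuous_plus (fun t => fst (f t) * snd (g t)) (fun t => snd (f t) * fst (g t)));
    apply Rc_mult; auto.
Qed.

Lemma Cc_inv (g : R -> C) x :
  continuous (U := C_UniformSpace) g x -> g x <> RtoC 0 ->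
  continuous (U := C_UniformSpace) (fun t => Cinv (g t)) x.
Proof.
  intros Hg Hnz.
  pose proof (Cc_fst _ _ Hg) as H1. pose proof (Cc_snd _ _ Hg) as H2.
  pose proof (C_nz_norm _ Hnz) as Hn.
  assert (Hd : continuous (fun t => / (fst (g t) ^ 2 + snd (g t) ^ 2)) x).
  { apply (Rc_inv (fun t => fst (g t) ^ 2 + snd (g t) ^ 2)); auto.
    apply (continuous_plus (fun t => fst (g t) ^ 2) (fun t => snd (g t) ^ 2)).
    apply (continuous_ext (fun t => fst (g t) * (fst (g t) * 1))). intros; simpl; ring.
    apply Rc_mult; auto. apply Rc_mult; auto. apply continuous_const.
    apply (continuous_ext (fun t => snd (g t) * (snd (g t) * 1))). intros; simpl; ring.
    apply Rc_mult; auto. apply Rc_mult; auto. apply continuous_const. }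
  apply (continuous_ext (fun t => ((fst (g t) * / (fst (g t) ^ 2 + snd (g t) ^ 2),
                                  - snd (g t) * / (fst (g t) ^ 2 + snd (g t) ^ 2)) : C))).
  { intros t. reflexivity. }
  apply Cc_pair; apply Rc_mult; auto.
  apply (continuous_opp (fun t => snd (g t))); auto.
Qed.

Definition clamp (a x : R) : R := Rmax (- a) (Rmin a x).

Lemma clamp_lip a x y : 0 < a -> Rabs (clamp a y - clamp a x) <= Rabs (y - x).
Proof.
  intros Ha. unfold clamp, Rmax, Rmin.
  repeat (destruct Rle_dec); unfold Rabs; repeat (destruct Rcase_abs); lra.
Qed.

Lemma clamp_cont a x : 0 < a -> continuous (clamp a) x.
Proof.
  intros Ha. apply filterlim_locally. intros eps.
  exists eps. intros y Hy.
  unfold ball in *; simpl in *. unfold AbsRing_ball in *. unfold abs, minus, plus, opp in *; simpl in *.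
  eapply Rle_lt_trans. apply clamp_lip; auto. exact Hy.
Qed.

Lemma clamp_Icc a x : 0 < a -> Icc a (clamp a x).
Proof. intros Ha. unfold Icc, clamp, Rmax, Rmin. repeat destruct Rle_dec; lra. Qed.

Lemma clamp_id a x : Icc a x -> clamp a x = x.
Proof. unfold Icc, clamp, Rmax, Rmin. intros H. repeat destruct Rle_dec; lra. Qed.

Lemma clamp_loc a x : Ioo a x -> locally x (fun t => clamp a t = t).
Proof.
  intros [H1 H2].
  assert (He : 0 < Rmin (x + a) (a - x)) by (apply Rmin_pos; lra).
  exists (mkposreal _ He). intros y Hy.
  unfold ball in Hy; simpl in Hy. unfold AbsRing_ball, abs, minus, plus, opp in Hy; simpl in Hy.
  apply clamp_id. unfold Icc.
  pose proof (Rmin_l (x + a) (a - x)). pose proof (Rmin_r (x + a) (a - x)).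
  unfold Rabs in Hy; destruct Rcase_abs in Hy; lra.
Qed.

Lemma ext_cont a (F : R -> C) x : 0 < a -> cont_on_Icc a F ->
  continuous (U := C_UniformSpace) (fun t => F (clamp a t)) x.
Proof.
  intros Ha HF. unfold continuous.
  eapply filterlim_comp. 2: apply (HF (clamp a x) (clamp_Icc a x Ha)).
  intros P HP. unfold within in HP. pose proof (clamp_cont a x Ha _ HP) as H.
  unfold filtermap in *. revert H. apply filter_imp. intros t Ht. apply Ht. apply clamp_Icc; auto.
Qed.

Lemma Cd_const (k : C) x : is_derive (V := C_R_NormedModule) (fun _ => k) x (RtoC 0).
Proof. exact (is_derive_const (V := C_R_NormedModule) k x). Qed.

Lemma Cd_plus (f g : R -> C) x df dg :
  is_derive (V := C_R_NormedModule) f x df -> is_derive (V := C_R_NormedModule) g x dg ->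
  is_derive (V := C_R_NormedModule) (fun t => Cplus (f t) (g t)) x (Cplus df dg).
Proof. intros; apply (is_derive_plus (V := C_R_NormedModule) f g); auto. Qed.

Lemma Cd_minus (f g : R -> C) x df dg :
  is_derive (V := C_R_NormedModule) f x df -> is_derive (V := C_R_NormedModule) g x dg ->
  is_derive (V := C_R_NormedModule) (fun t => Cminus (f t) (g t)) x (Cminus df dg).
Proof. intros; apply (is_derive_minus (V := C_R_NormedModule) f g); auto. Qed.

Lemma Cd_scal (k : C) (f : R -> C) x df :
  is_derive (V := C_R_NormedModule) f x df ->
  is_derive (V := C_R_NormedModule) (fun t => Cmult k (f t)) x (Cmult k df).
Proof.
  intros H. eapply Cd_eq. apply (Cd_mult (fun _ => k) f). apply Cd_const. exact H.
  rewrite Cmult_0_l, Cplus_0_l. reflexivity.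
Qed.

Lemma FTC (h : R -> C) x : (forall y, continuous (U := C_UniformSpace) h y) ->
  is_derive (V := C_R_NormedModule) (fun t => RInt (V := C_R_CompleteNormedModule) h 0 t) x (h x).
Proof.
  intros Hc. apply (is_derive_RInt (V := C_R_NormedModule) h _ 0).
  apply filter_forall. intros b. apply (RInt_correct (V := C_R_CompleteNormedModule)).
  apply ex_RInt_continuous. intros; apply Hc.
  apply Hc.
Qed.

Lemma deriv0_const (h : R -> C) x :
  (forall y, Rmin 0 x <= y <= Rmax 0 x -> is_derive (V := C_R_NormedModule) h y (RtoC 0)) ->
  h x = h 0.
Proof.
  intros H.
  pose proof (is_RInt_derive (V := C_R_CompleteNormedModule) h (fun _ => RtoC 0) 0 x H
     (fun y _ => continuous_const _ _)) as H1.
  pose proof (is_RInt_const (V := C_R_CompleteNormedModule) 0 x (RtoC 0)) as H2.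
  apply is_RInt_unique in H1. apply is_RInt_unique in H2. rewrite H1 in H2.
  revert H2. destruct (h x) as [p q], (h 0) as [r s].
  unfold minus, plus, opp, scal; simpl. unfold prod_plus, prod_opp, prod_scal; simpl.
  unfold plus, opp, scal, mult; simpl.
  intros E. injection E. unfold mult; simpl. intros. f_equal; lra.
Qed.

Lemma const_Icc a (h : R -> C) : 0 < a ->
  (forall y, continuous (U := C_UniformSpace) h y) ->
  (forall y, Ioo a y -> is_derive (V := C_R_NormedModule) h y (RtoC 0)) ->
  forall x, Icc a x -> h x = h 0.
Proof.
  intros Ha Hc Hd.
  assert (Hopen : forall x, Ioo a x -> h x = h 0).
  { intros x [Hx1 Hx2]. apply deriv0_const. intros y Hy. apply Hd. unfold Ioo.
    revert Hy. unfold Rmin, Rmax. destruct Rle_dec; lra. }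
  intros x [H1 H2].
  destruct (Req_dec x a) as [->|Hxa].
  { apply (filterlim_locally_unique (V := C_R_NormedModule) (F := at_left a) h).
    apply (filterlim_filter_le_1 (F := locally a)). apply filter_le_within. apply Hc.
    apply filterlim_ext_loc with (f := fun _ => h 0).
    exists (mkposreal a Ha). intros y Hy Hya. symmetry. apply Hopen.
    unfold ball in Hy; simpl in Hy. unfold AbsRing_ball, abs, minus, plus, opp in Hy; simpl in Hy.
    unfold Ioo. unfold Rabs in Hy; destruct Rcase_abs in Hy; lra.
    apply filterlim_const. }
  destruct (Req_dec x (- a)) as [->|Hxa'].
  { apply (filterlim_locally_unique (V := C_R_NormedModule) (F := at_right (- a)) h).
    apply (filterlim_filter_le_1 (F := locally (- a))). apply filter_le_within. apply Hc.
    apply filterlim_ext_loc with (f := fun _ => h 0).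
    exists (mkposreal a Ha). intros y Hy Hya. symmetry. apply Hopen.
    unfold ball in Hy; simpl in Hy. unfold AbsRing_ball, abs, minus, plus, opp in Hy; simpl in Hy.
    unfold Ioo. unfold Rabs in Hy; destruct Rcase_abs in Hy; lra.
    apply filterlim_const. }
  apply Hopen. unfold Ioo. lra.
Qed.

Lemma wpow_cont (F : R -> C) n y :
  (forall y, continuous (U := C_UniformSpace) F y) -> (forall y, F y <> RtoC 0) ->
  continuous (U := C_UniformSpace) (wpow F n) y.
Proof.
  intros Hc Hnz. unfold wpow. destruct (Nat.even n).
  - apply Cc_mult; auto.
  - apply (Cc_inv (fun s => Cmult (F s) (F s))). apply Cc_mult; auto.
    apply Cmult_neq_0; auto.
Qed.

Lemma Xrec_der_aux (F : R -> C) b m y :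
  (forall y, continuous (U := C_UniformSpace) F y) -> (forall y, F y <> RtoC 0) ->
  (forall y, continuous (U := C_UniformSpace) (Xrec F b m) y) ->
  is_derive (V := C_R_NormedModule) (Xrec F b (S m)) y
    (Cmult (RtoC (INR (S m))) (Cmult (Xrec F b m y) (wpow F (if b then m else S m) y))).
Proof.
  intros Hc Hnz HX.
  change (Xrec F b (S m)) with (fun x => Cmult (RtoC (INR (S m)))
        (RInt (V := C_R_CompleteNormedModule)
           (fun s => Cmult (Xrec F b m s) (wpow F (if b then m else S m) s)) 0 x)).
  apply Cd_scal. apply (FTC (fun s => Cmult (Xrec F b m s) (wpow F (if b then m else S m) s))).
  intros z. apply Cc_mult; auto. apply wpow_cont; auto.
Qed.

Lemma Xrec_cont (F : R -> C) b n y :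
  (forall y, continuous (U := C_UniformSpace) F y) -> (forall y, F y <> RtoC 0) ->
  continuous (U := C_UniformSpace) (Xrec F b n) y.
Proof.
  intros Hc Hnz. revert y. induction n as [|m IH]; intros y.
  - apply continuous_const.
  - apply (ex_derive_continuous (V := C_R_NormedModule)). eexists.
    apply Xrec_der_aux; auto.
Qed.

Lemma Xrec_der (F : R -> C) b m y :
  (forall y, continuous (U := C_UniformSpace) F y) -> (forall y, F y <> RtoC 0) ->
  is_derive (V := C_R_NormedModule) (Xrec F b (S m)) y
    (Cmult (RtoC (INR (S m))) (Cmult (Xrec F b m y) (wpow F (if b then m else S m) y))).
Proof. intros; apply Xrec_der_aux; auto. intros; apply Xrec_cont; auto. Qed.

Lemma Xrec_0 (F : R -> C) b m : Xrec F b (S m) 0 = RtoC 0.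
Proof.
  change (Cmult (RtoC (INR (S m)))
        (RInt (V := C_R_CompleteNormedModule)
           (fun s => Cmult (Xrec F b m s) (wpow F (if b then m else S m) s)) 0 0) = RtoC 0).
  rewrite RInt_point. apply Cmult_0_r.
Qed.

Definition Zs (F : R -> C) n := Xrec F (Nat.even n) n.
Definition Ws (F : R -> C) n := Xrec F (Nat.odd n) n.

Lemma dZ (F : R -> C) m y :
  (forall y, continuous (U := C_UniformSpace) F y) -> (forall y, F y <> RtoC 0) ->
  is_derive (V := C_R_NormedModule) (Zs F (S m)) y
    (Cmult (RtoC (INR (S m))) (Cmult (Ws F m y) (Cinv (Cmult (F y) (F y))))).
Proof.
  intros Hc Hnz. unfold Zs, Ws. eapply Cd_eq. apply Xrec_der; auto.
  rewrite Nat.even_succ. f_equal. f_equal. unfold wpow.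
  destruct (Nat.odd m) eqn:E.
  - rewrite <- Nat.negb_odd, E. reflexivity.
  - rewrite Nat.even_succ, E. reflexivity.
Qed.

Lemma dW (F : R -> C) m y :
  (forall y, continuous (U := C_UniformSpace) F y) -> (forall y, F y <> RtoC 0) ->
  is_derive (V := C_R_NormedModule) (Ws F (S m)) y
    (Cmult (RtoC (INR (S m))) (Cmult (Zs F m y) (Cmult (F y) (F y)))).
Proof.
  intros Hc Hnz. unfold Zs, Ws. eapply Cd_eq. apply Xrec_der; auto.
  rewrite Nat.odd_succ. f_equal. f_equal. unfold wpow.
  destruct (Nat.even m) eqn:E.
  - rewrite E. reflexivity.
  - rewrite Nat.even_succ, <- Nat.negb_even, E. reflexivity.
Qed.

Lemma Xrec_ext a (f F : R -> C) b n x : 0 < a ->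
  (forall y, Icc a y -> f y = F y) -> Icc a x -> Xrec f b n x = Xrec F b n x.
Proof.
  intros Ha H. revert x. induction n as [|m IH]; intros x Hx.
  - reflexivity.
  - change (Cmult (RtoC (INR (S m)))
        (RInt (V := C_R_CompleteNormedModule)
           (fun s => Cmult (Xrec f b m s) (wpow f (if b then m else S m) s)) 0 x) =
            Cmult (RtoC (INR (S m)))
        (RInt (V := C_R_CompleteNormedModule)
           (fun s => Cmult (Xrec F b m s) (wpow F (if b then m else S m) s)) 0 x)).
    f_equal. apply RInt_ext. intros y Hy.
    assert (Hy' : Icc a y).
    { revert Hy Hx. unfold Icc, Rmin, Rmax. destruct Rle_dec; intros; lra. }
    rewrite IH; auto. unfold wpow. rewrite H; auto.
Qed.

Lemma step a (L Rf : R -> C) (dL dR : R -> C) : 0 < a ->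
  (forall y, Icc a y -> is_derive (V := C_R_NormedModule) L y (dL y)) ->
  (forall y, Icc a y -> is_derive (V := C_R_NormedModule) Rf y (dR y)) ->
  (forall y, Icc a y -> dL y = dR y) -> L 0 = Rf 0 ->
  forall x, Icc a x -> L x = Rf x.
Proof.
  intros Ha HL HR Heq H0 x Hx.
  assert (E : (fun t => Cminus (L t) (Rf t)) x = (fun t => Cminus (L t) (Rf t)) 0).
  { apply (deriv0_const (fun t => Cminus (L t) (Rf t))). intros y Hy.
    assert (Hy' : Icc a y).
    { revert Hy Hx. unfold Icc, Rmin, Rmax. destruct Rle_dec; intros; lra. }
    eapply Cd_eq. apply Cd_minus. apply HL; auto. apply HR; auto.
    rewrite (Heq y Hy'). apply Cplus_opp_r. }
  simpl in E. rewrite H0 in E. apply Ceq_minus. rewrite E. ring.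
Qed.

Definition uu (G : R -> C) (c : C) (y : R) : C := Cplus (RtoC 1) (Cmult c (Zs G 1 y)).

Lemma du (G : R -> C) c y :
  (forall y, continuous (U := C_UniformSpace) G y) -> (forall y, G y <> RtoC 0) ->
  is_derive (V := C_R_NormedModule) (uu G c) y (Cmult c (Cinv (Cmult (G y) (G y)))).
Proof.
  intros Hc Hnz. unfold uu. eapply Cd_eq. apply Cd_plus. apply Cd_const. apply Cd_scal.
  apply (dZ G 0); auto.
  change (Ws G 0 y) with (RtoC 1). change (INR 1) with 1.
  match goal with |- @eq _ ?a ?b => change (@eq C a b) end. ring.
Qed.

Lemma INR_S_nz n : RtoC (INR (S n)) <> RtoC 0.
Proof.
  intros E. apply RtoC_inj in E. pose proof (lt_0_INR (S n) (Nat.lt_0_succ n)). lra.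
Qed.

Definition Zrel (F G : R -> C) c n y : Prop :=
  if Nat.even n then
    Zs F n y = Cmult (Cplus (Zs G n y) (Cmult (Cdiv c (RtoC (INR (S n)))) (Zs G (S n) y)))
                     (Cinv (uu G c y))
  else Zs F n y = Cmult (Zs G n y) (Cinv (uu G c y)).

Definition Wrel (F G : R -> C) c n y : Prop :=
  if Nat.even n then
    Ws F n y = Cminus (Cmult (uu G c y) (Ws G n y))
                      (Cmult (Cdiv c (RtoC (INR (S n)))) (Zs G (S n) y))
  else
    Ws F n y = Cminus (Cminus (Cmult (uu G c y)
                 (Cplus (Ws G n y) (Cmult (Cdiv c (RtoC (INR (S n)))) (Ws G (S n) y))))
                 (Cmult (Cdiv c (RtoC (INR (S n)))) (Zs G (S n) y)))
              (Cmult (Cdiv (Cmult c c) (Cmult (RtoC (INR (S n))) (RtoC (INR (S (S n))))))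
                     (Zs G (S (S n)) y)).

Lemma Zs0 F m : Zs F (S m) 0 = RtoC 0.
Proof. apply Xrec_0. Qed.
Lemma Ws0 F m : Ws F (S m) 0 = RtoC 0.
Proof. apply Xrec_0. Qed.
Lemma uu0 G c : uu G c 0 = RtoC 1.
Proof. unfold uu. rewrite Zs0. ring. Qed.

Section Rels.
Variables (a : R) (F G : R -> C) (c : C).
Hypothesis Ha : 0 < a.
Hypothesis HFc : forall y, continuous (U := C_UniformSpace) F y.
Hypothesis HGc : forall y, continuous (U := C_UniformSpace) G y.
Hypothesis HFnz : forall y, F y <> RtoC 0.
Hypothesis HGnz : forall y, G y <> RtoC 0.
Hypothesis HFG : forall y, Icc a y -> F y = Cmult (G y) (uu G c y).
Hypothesis Hu : forall y, Icc a y -> uu G c y <> RtoC 0.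


Ltac dtac :=
  match goal with
  | |- is_derive (fun t => Cminus (@?f t) (@?g t)) _ _ => apply (Cd_minus f g); dtac
  | |- is_derive (fun t => Cplus (@?f t) (@?g t)) _ _ => apply (Cd_plus f g); dtac
  | |- is_derive (fun t => Cmult (@?f t) (@?g t)) _ _ => apply (Cd_mult f g); dtac
  | |- is_derive (fun t => Cinv (@?f t)) _ _ => apply (Cd_inv f); [dtac | apply Hu; auto]
  | |- is_derive (fun t => uu G c t) _ _ => apply du; auto
  | |- is_derive (fun t => Zs _ (S _) t) _ _ => apply dZ; auto
  | |- is_derive (fun t => Ws _ (S _) t) _ _ => apply dW; auto
  | |- is_derive (fun t => ?k) _ _ => apply (Cd_const k)
  end.

Ltac nz_tac m y Hy :=
  pose proof (Hu y Hy); pose proof (HGnz y); pose proof (INR_S_nz m);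
  pose proof (INR_S_nz (S m)); pose proof (INR_S_nz (S (S m))).

Lemma Zstep_odd m : (forall y, Icc a y -> Wrel F G c m y) -> Nat.even m = true ->
  forall y, Icc a y -> Zrel F G c (S m) y.
Proof.
  intros IH Hm. unfold Zrel. rewrite Nat.even_succ, <- Nat.negb_even, Hm. simpl negb. cbv iota.
  eapply (step a (Zs F (S m)) (fun t => Cmult (Zs G (S m) t) (Cinv (uu G c t)))
    (fun y => Cmult (RtoC (INR (S m))) (Cmult (Ws F m y) (Cinv (Cmult (F y) (F y))))) _ Ha).
  - intros y Hy. apply dZ; auto.
  - intros y Hy. dtac.
  - intros y Hy. cbv beta. pose proof (IH y Hy) as W. unfold Wrel in W. rewrite Hm in W.
    rewrite W, (HFG y Hy). nz_tac m y Hy.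
    field. repeat split; assumption.
  - rewrite !Zs0. ring.
Qed.

Lemma Zstep_even m : (forall y, Icc a y -> Wrel F G c m y) -> Nat.even m = false ->
  forall y, Icc a y -> Zrel F G c (S m) y.
Proof.
  intros IH Hm. unfold Zrel. rewrite Nat.even_succ, <- Nat.negb_even, Hm. simpl negb. cbv iota.
  eapply (step a (Zs F (S m))
    (fun t => Cmult (Cplus (Zs G (S m) t) (Cmult (Cdiv c (RtoC (INR (S (S m))))) (Zs G (S (S m)) t)))
                     (Cinv (uu G c t)))
    (fun y => Cmult (RtoC (INR (S m))) (Cmult (Ws F m y) (Cinv (Cmult (F y) (F y))))) _ Ha).
  - intros y Hy. apply dZ; auto.
  - intros y Hy. dtac.
  - intros y Hy. cbv beta. pose proof (IH y Hy) as W. unfold Wrel in W. rewrite Hm in W.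
    rewrite W, (HFG y Hy). nz_tac m y Hy.
    field. repeat split; assumption.
  - rewrite !Zs0. ring.
Qed.

Lemma Wstep_odd m : (forall y, Icc a y -> Zrel F G c m y) -> Nat.even m = false ->
  forall y, Icc a y -> Wrel F G c (S m) y.
Proof.
  intros IH Hm. unfold Wrel. rewrite Nat.even_succ, <- Nat.negb_even, Hm. simpl negb. cbv iota.
  eapply (step a (Ws F (S m))
    (fun t => Cminus (Cmult (uu G c t) (Ws G (S m) t))
                      (Cmult (Cdiv c (RtoC (INR (S (S m))))) (Zs G (S (S m)) t)))
    (fun y => Cmult (RtoC (INR (S m))) (Cmult (Zs F m y) (Cmult (F y) (F y)))) _ Ha).
  - intros y Hy. apply dW; auto.
  - intros y Hy. dtac.
  - intros y Hy. cbv beta. pose proof (IH y Hy) as W. unfold Zrel in W. rewrite Hm in W.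
    rewrite W, (HFG y Hy). nz_tac m y Hy.
    field. repeat split; assumption.
  - rewrite !Zs0, !Ws0. ring.
Qed.

Lemma Wstep_even m : (forall y, Icc a y -> Zrel F G c m y) -> Nat.even m = true ->
  forall y, Icc a y -> Wrel F G c (S m) y.
Proof.
  intros IH Hm. unfold Wrel. rewrite Nat.even_succ, <- Nat.negb_even, Hm. simpl negb. cbv iota.
  eapply (step a (Ws F (S m))
    (fun t => Cminus (Cminus (Cmult (uu G c t)
                 (Cplus (Ws G (S m) t) (Cmult (Cdiv c (RtoC (INR (S (S m))))) (Ws G (S (S m)) t))))
                 (Cmult (Cdiv c (RtoC (INR (S (S m))))) (Zs G (S (S m)) t)))
              (Cmult (Cdiv (Cmult c c) (Cmult (RtoC (INR (S (S m)))) (RtoC (INR (S (S (S m)))))))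
                     (Zs G (S (S (S m))) t)))
    (fun y => Cmult (RtoC (INR (S m))) (Cmult (Zs F m y) (Cmult (F y) (F y)))) _ Ha).
  - intros y Hy. apply dW; auto.
  - intros y Hy. dtac.
  - intros y Hy. cbv beta. pose proof (IH y Hy) as W. unfold Zrel in W. rewrite Hm in W.
    rewrite W, (HFG y Hy). nz_tac m y Hy. pose proof (INR_S_nz (S (S (S m)))).
    field. repeat split; assumption.
  - rewrite !Zs0, !Ws0. ring.
Qed.

Lemma rels n : (forall y, Icc a y -> Zrel F G c n y) /\ (forall y, Icc a y -> Wrel F G c n y).
Proof.
  induction n as [|m [IHZ IHW]].
  - split; intros y Hy.
    + unfold Zrel. simpl Nat.even. cbv iota. change (Zs F 0 y) with (RtoC 1).
      change (Zs G 0 y) with (RtoC 1). change (INR 1) with 1.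
      pose proof (Hu y Hy). unfold uu in *. field. assumption.
    + unfold Wrel. simpl Nat.even. cbv iota. change (Ws F 0 y) with (RtoC 1).
      change (Ws G 0 y) with (RtoC 1). change (INR 1) with 1.
      unfold uu. field.
  - destruct (Nat.even m) eqn:Hm; split.
    + apply Zstep_odd; auto.
    + apply Wstep_even; auto.
    + apply Zstep_even; auto.
    + apply Wstep_odd; auto.
Qed.
End Rels.

Ltac ceq := match goal with |- @eq _ ?a ?b => change (@eq C a b) end.

Lemma Cc_minus (f g : R -> C) x :
  continuous (U := C_UniformSpace) f x -> continuous (U := C_UniformSpace) g x ->
  continuous (U := C_UniformSpace) (fun t => Cminus (f t) (g t)) x.
Proof. intros; apply (continuous_minus (V := C_R_NormedModule) f g); auto. Qed.

Lemma clamp_der a (f f1 : R -> C) y : Ioo a y -> is_derive (V := C_R_NormedModule) f y (f1 y) ->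
  is_derive (V := C_R_NormedModule) (fun t => f (clamp a t)) y (f1 (clamp a y)).
Proof.
  intros Hy Hd. rewrite (clamp_id a y). 2: { destruct Hy; unfold Icc; lra. }
  apply (is_derive_ext_loc (V := C_R_NormedModule) f). 2: exact Hd.
  apply (filter_imp (fun t => clamp a t = t)). intros t ->. reflexivity.
  apply clamp_loc; auto.
Qed.

Theorem mainTheorem1 (a : R) (q f f1 f2 g g1 g2 : R -> C) :
  0 < a ->
  cont_on_Icc a q ->
  C2_C1 a f f1 f2 ->
  C2_C1 a g g1 g2 ->
  (forall x, Ioo a x -> f2 x = Cmult (q x) (f x)) ->
  (forall x, Ioo a x -> g2 x = Cmult (q x) (g x)) ->
  (forall x, Icc a x -> f x <> RtoC 0) ->
  (forall x, Icc a x -> g x <> RtoC 0) ->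
  f 0 = RtoC 1 -> g 0 = RtoC 1 ->
  (forall k : nat, Nat.odd k = true ->
     forall x, Icc a x -> phi f k x = phi g k x) /\
  (forall k : nat, Nat.even k = true ->
     forall x, Icc a x ->
       phi f k x = Cplus (phi g k x)
         (Cmult (Cdiv (Cminus (f1 0) (g1 0)) (RtoC (INR (k + 1))))
                (phi g (k + 1) x))).
Proof.
  intros Ha Hq [Hfc [Hf1c [Hfd [Hf1d _]]]] [Hgc [Hg1c [Hgd [Hg1d _]]]] Hf2 Hg2 Hfnz Hgnz Hf0 Hg0.
  set (F := fun t => f (clamp a t)). set (F1 := fun t => f1 (clamp a t)).
  set (G := fun t => g (clamp a t)). set (G1 := fun t => g1 (clamp a t)).
  set (c := Cminus (f1 0) (g1 0)).
  assert (I0 : Icc a 0) by (unfold Icc; lra).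
  assert (HFc : forall y, continuous (U := C_UniformSpace) F y) by (intros; apply ext_cont; auto).
  assert (HGc : forall y, continuous (U := C_UniformSpace) G y) by (intros; apply ext_cont; auto).
  assert (HF1c : forall y, continuous (U := C_UniformSpace) F1 y) by (intros; apply ext_cont; auto).
  assert (HG1c : forall y, continuous (U := C_UniformSpace) G1 y) by (intros; apply ext_cont; auto).
  assert (HFnz : forall y, F y <> RtoC 0) by (intros; apply Hfnz; apply clamp_Icc; auto).
  assert (HGnz : forall y, G y <> RtoC 0) by (intros; apply Hgnz; apply clamp_Icc; auto).
  assert (EF : forall y, Icc a y -> f y = F y) by (intros; unfold F; rewrite clamp_id; auto).
  assert (EG : forall y, Icc a y -> g y = G y) by (intros; unfold G; rewrite clamp_id; auto).
  assert (IooIcc : forall y, Ioo a y -> Icc a y) by (unfold Ioo, Icc; intros; lra).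
  assert (HWr : forall y, Ioo a y ->
            Cminus (Cmult (F1 y) (G y)) (Cmult (F y) (G1 y)) = c).
  { intros y Hy.
    assert (E := const_Icc a (fun t => Cminus (Cmult (F1 t) (G t)) (Cmult (F t) (G1 t))) Ha).
    cbv beta in E. rewrite E; auto.
    - unfold F1, G, F, G1, c. rewrite !(clamp_id a 0); auto. rewrite Hf0, Hg0. ring.
    - intros z. apply Cc_minus; apply Cc_mult; auto.
    - intros z Hz. eapply Cd_eq. apply Cd_minus; apply Cd_mult;
        (apply clamp_der; [exact Hz | auto]).
      rewrite !(clamp_id a z); auto. rewrite (Hf2 z Hz), (Hg2 z Hz).
      unfold F, G, F1, G1. rewrite !(clamp_id a z); auto. ceq. ring. }
  assert (Huc : forall y, continuous (U := C_UniformSpace) (uu G c) y).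
  { intros y. apply (ex_derive_continuous (V := C_R_NormedModule)). eexists. apply du; auto. }
  assert (HD : forall y, Icc a y -> Cminus (Cmult (F y) (Cinv (G y))) (uu G c y) = RtoC 0).
  { intros y Hy.
    assert (E := const_Icc a (fun t => Cminus (Cmult (F t) (Cinv (G t))) (uu G c t)) Ha).
    cbv beta in E. rewrite E; auto.
    - rewrite uu0. unfold F, G. rewrite !(clamp_id a 0); auto. rewrite Hf0, Hg0.
      field.
    - intros z. apply Cc_minus. apply Cc_mult; auto. apply Cc_inv; auto. auto.
    - intros z Hz. eapply Cd_eq. apply Cd_minus. apply Cd_mult.
      apply clamp_der; [exact Hz | apply Hfd; auto].
      apply Cd_inv. apply clamp_der; [exact Hz | apply Hgd; auto]. auto.
      apply du; auto.
      pose proof (HWr z Hz) as W. unfold F1, G1 in W. rewrite (clamp_id a z) in W; auto.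
      rewrite (clamp_id a z); auto. pose proof (HGnz z).
      ceq. rewrite <- W. field. auto. }
  assert (HFG : forall y, Icc a y -> F y = Cmult (G y) (uu G c y)).
  { intros y Hy. pose proof (HD y Hy) as E. apply Ceq_minus in E. rewrite <- E.
    pose proof (HGnz y). field. auto. }
  assert (Hu : forall y, Icc a y -> uu G c y <> RtoC 0).
  { intros y Hy E. apply (HFnz y). rewrite HFG, E; auto. ring. }
  pose proof (rels a F G c Ha HFc HGc HFnz HGnz HFG Hu) as Rl.
  split.
  - intros k Hk x Hx. destruct (Rl k) as [RZ _]. pose proof (RZ x Hx) as Z.
    unfold Zrel in Z. rewrite <- Nat.negb_odd, Hk in Z. simpl negb in Z. cbv iota in Z.
    unfold phi. rewrite (Xrec_ext a f F), (Xrec_ext a g G); auto.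
    rewrite EF, EG; auto. fold (Zs F k) (Zs G k). rewrite Z, HFG; auto.
    pose proof (Hu x Hx). field. auto.
  - intros k Hk x Hx. destruct (Rl k) as [RZ _]. pose proof (RZ x Hx) as Z.
    unfold Zrel in Z. rewrite Hk in Z. cbv iota in Z.
    unfold phi. rewrite !(Xrec_ext a f F), !(Xrec_ext a g G); auto.
    rewrite EF, EG; auto. rewrite Nat.add_1_r. rewrite Hk.
    assert (E1 : Xrec F true k x = Zs F k x) by (unfold Zs; rewrite Hk; reflexivity).
    assert (E2 : Xrec G true k x = Zs G k x) by (unfold Zs; rewrite Hk; reflexivity).
    change (Xrec G (Nat.even (S k)) (S k) x) with (Zs G (S k) x).
    rewrite E1, E2, Z, HFG; auto. pose proof (Hu x Hx). pose proof (INR_S_nz k).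
    field. auto.
Qed.
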